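(* Let $\mathcal{C}$ be an optimum distance flag code of type $(t_1,\ldots,t_r)$ on $\mathbb{F}_q^n$. Then for every $i\in\{1,\ldots,r\}$ the $i$-projected code $\mathcal{C}_i$ satisfies $d_S(\mathcal{C}_i)=\min\{2t_i,2(n-t_i)\}$.
   Context: $q$ is a prime power, $n>1$. For subspaces $\mathcal{U},\mathcal{V}$ of $\mathbb{F}_q^n$, $d_S(\mathcal{U},\mathcal{V})=\dim(\mathcal{U}+\mathcal{V})-\dim(\mathcal{U}\cap\mathcal{V})$; for a set $\mathcal{D}$ of subspaces, $d_S(\mathcal{D})$ is the minimum of $d_S$ over pairs of distinct elements (and $d_S(\mathcal{D})=0$ if $|\mathcal{D}|=1$). A flag of type $(t_1,\ldots,t_r)$, $0<t_1<\cdots<t_r<n$, is a tuple $(\mathcal{F}_1,\ldots,\mathcal{F}_r)$ of nested subspaces $\mathcal{F}_1\subsetneq\cdots\subsetneq\mathcal{F}_r$ of $\mathbb{F}_q^n$ with $\dim\mathcal{F}_i=t_i$. A flag code of that type is a set of at least two such flags; its distance $d_f(\mathcal{C})$ is the minimum over distinct $\mathcal{F},\mathcal{F}'\in\mathcal{C}$ of $\sum_{i=1}^r d_S(\mathcal{F}_i,\mathcal{F}'_i)$. The code is an optimum distance flag code if $d_f(\mathcal{C})= 2\left(\sum_{t_i \leq \lfloor n/2\rfloor} t_i + \sum_{t_i > \lfloor n/2\rfloor} (n-t_i)\right)$. The $i$-projected code is $\mathcal{C}_i=\{\mathcal{F}_i : (\mathcal{F}_1,\ldots,\mathcal{F}_r)\in\mathcal{C}\}$.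 *)

(* Defs.v *)
From HB Require Import structures.
From mathcomp Require Import all_boot all_order all_algebra.
Set Implicit Arguments. Unset Strict Implicit. Unset Printing Implicit Defensive.
Import GRing.Theory.
Local Open Scope ring_scope.

(* Ambient space F_q^n is 'rV[F]_n, F a finite field (q = #|F| a prime power). *)
Definition subsp (F : finFieldType) (n : nat) := {vspace 'rV[F]_n}.

Definition dS (F : finFieldType) (n : nat) (U V : subsp F n) : nat :=
  (\dim (U + V)%VS - \dim (U :&: V)%VS)%N.

(* Minimum of a list of naturals (0 for the empty list). *)
Definition seq_min (s : seq nat) : nat := foldr minn (head 0%N s) s.

(* d_S(D): minimum over pairs of distinct elements; 0 if D has one element. *)
Definition dS_set (F : finFieldType) (n : nat) (D : seq (subsp F n)) : nat :=
  seq_min [seq dS p.1 p.2 | p <- [seq (U, V) | U <- D, V <- D] & p.1 != p.2].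

Definition flag (F : finFieldType) (n r : nat) := {ffun 'I_r -> subsp F n}.

Definition is_flag_type (n r : nat) (t : 'I_r -> nat) : Prop :=
  (forall i : 'I_r, 0 < t i < n)%N /\ (forall i j : 'I_r, (i < j)%N -> (t i < t j)%N).

Definition is_flag_of_type (F : finFieldType) (n r : nat) (t : 'I_r -> nat)
    (f : flag F n r) : Prop :=
  (forall i : 'I_r, \dim (f i) = t i) /\
  (forall i j : 'I_r, (i < j)%N -> (f i <= f j)%VS /\ f i != f j).

(* A flag code of type t: a set (duplicate-free list) of at least two flags of type t. *)
Definition is_flag_code (F : finFieldType) (n r : nat) (t : 'I_r -> nat)
    (C : seq (flag F n r)) : Prop :=
  uniq C /\ (1 < size C)%N /\ (forall f, f \in C -> is_flag_of_type t f).

Definition flag_dist (F : finFieldType) (n r : nat) (f g : flag F n r) : nat :=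
  (\sum_(i < r) dS (f i) (g i))%N.

Definition code_dist (F : finFieldType) (n r : nat) (C : seq (flag F n r)) : nat :=
  seq_min [seq flag_dist p.1 p.2 | p <- [seq (f, g) | f <- C, g <- C] & p.1 != p.2].

Definition optimum_bound (n r : nat) (t : 'I_r -> nat) : nat :=
  (2 * ((\sum_(i < r | t i <= n./2) t i) + (\sum_(i < r | n./2 < t i) (n - t i))))%N.

Definition is_optimum_distance_flag_code (F : finFieldType) (n r : nat)
    (t : 'I_r -> nat) (C : seq (flag F n r)) : Prop :=
  is_flag_code t C /\ code_dist C = optimum_bound n t.

Definition proj_code (F : finFieldType) (n r : nat) (C : seq (flag F n r)) (i : 'I_r)
  : seq (subsp F n) := undup [seq (f : flag F n r) i | f <- C].

(* Main.v *)
Require Import Defs.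
From HB Require Import structures.
From mathcomp Require Import all_boot all_order all_algebra.
From mathcomp Require Import zify.

Lemma seq_min_le_foldr (a : nat) (s : seq nat) x : x \in s -> (foldr minn a s <= x)%N.
Proof.
elim: s => //= y s IH; rewrite in_cons => /orP [/eqP ->|/IH H].
  by rewrite geq_minl.
by rewrite geq_min H orbT.
Qed.

Lemma seq_min_le (s : seq nat) x : x \in s -> (seq_min s <= x)%N.
Proof. exact: seq_min_le_foldr. Qed.

Lemma seq_min_const (s : seq nat) c x : x \in s -> (forall y, y \in s -> y = c) ->
  seq_min s = c.
Proof.
case: s => // y s _ H.
rewrite /seq_min /= (H y (mem_head _ _)).
have: forall z, z \in s -> z = c by move=> z zs; apply: H; rewrite in_cons zs orbT.
suff E : forall s', (forall z, z \in s' -> z = c) -> foldr minn c s' = c.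
  by move=> Hs; rewrite E // minnn.
elim => /= [|z s' IH] Hs; first by [].
rewrite IH; last by move=> w ws; apply: Hs; rewrite in_cons ws orbT.
by rewrite (Hs z (mem_head _ _)) minnn.
Qed.

Lemma dimfull (F : finFieldType) n : \dim (fullv : {vspace 'rV[F]_n}) = n.
Proof. by rewrite dimvf /dim /= mul1n. Qed.

Lemma dS_le (F : finFieldType) n (U V : subsp F n) k :
  \dim U = k -> \dim V = k -> (dS U V <= minn (2 * k) (2 * (n - k)))%N.
Proof.
move=> hU hV; rewrite /dS.
have h1 := dimv_sum_cap U V.
have h2 := dimvS (subvf (U + V)%VS). rewrite dimfull in h2.
have h3 := dimvS (subvf U). rewrite dimfull in h3.
rewrite hU hV in h1. rewrite hU in h3.
rewrite leq_min; apply/andP; split; lia.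
Qed.

Lemma dS_refl (F : finFieldType) n (U : subsp F n) : dS U U = 0%N.
Proof. by rewrite /dS addvv capvv subnn. Qed.

Theorem proposition3p7 (F : finFieldType) (n r : nat) (t : 'I_r -> nat)
    (C : seq (flag F n r)) :
  (1 < n)%N -> is_flag_type n t ->
  is_optimum_distance_flag_code t C ->
  forall i : 'I_r, dS_set (proj_code C i) = minn (2 * t i) (2 * (n - t i)).
Proof.
move=> n1 [tpos tinc] [[uC [sC Cty]] cd] i.
pose b j := minn (2 * t j) (2 * (n - t j)).
have dSle : forall f g, f \in C -> g \in C -> forall j, (dS (f j) (g j) <= b j)%N.
  move=> f g fC gC j; have [df _] := Cty f fC; have [dg _] := Cty g gC.
  exact: dS_le.
have ob : optimum_bound n t = (\sum_j b j)%N.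
  rewrite /optimum_bound mulnDr !big_distrr /= [RHS](bigID (fun j => t j <= n./2)%N) /=.
  have hn := odd_double_half n. have ho : (odd n <= 1)%N by case: (odd n).
  congr (_ + _)%N.
    by apply: eq_bigr => j hj; rewrite /b; apply/esym/minn_idPl; lia.
  apply: eq_big => j; first by rewrite ltnNge.
  by move=> hj; rewrite /b; apply/esym/minn_idPr; lia.
have key : forall f g, f \in C -> g \in C -> f != g -> dS (f i) (g i) = b i.
  move=> f g fC gC fg.
  have : (optimum_bound n t <= flag_dist f g)%N.
    rewrite -cd; apply: seq_min_le; apply/mapP; exists (f, g) => //.
    by rewrite mem_filter /= fg; apply: allpairs_f.
  rewrite ob /flag_dist (bigD1 i) //= [X in (_ <= X)%N](bigD1 i) //=.
  have h2 : (\sum_(j < r | j != i) dS (f j) (g j) <= \sum_(j < r | j != i) b j)%N.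
    by apply: leq_sum => j _; exact: dSle.
  have := dSle f g fC gC i; move: h2.
  move: (\sum_(j < r | j != i) dS (f j) (g j))%N (\sum_(j < r | j != i) b j)%N (dS (f i) (g i)) (b i).
  move=> x y z w; lia.
have bpos : (0 < b i)%N by rewrite /b; have := tpos i; lia.
have inproj : forall U, U \in proj_code C i -> exists2 f, f \in C & U = f i.
  by move=> U; rewrite mem_undup => /mapP.
case: C uC sC Cty cd key dSle inproj => [|f0 [|g0 C']] // uC sC Cty cd key dSle inproj.
have f0C : f0 \in [:: f0, g0 & C'] by rewrite mem_head.
have g0C : g0 \in [:: f0, g0 & C'] by rewrite in_cons mem_head orbT.
have fg0 : f0 != g0 by move: uC => /= /andP [] /negP H _; apply/eqP => E; apply: H; rewrite E mem_head.
have dfg := key _ _ f0C g0C fg0.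
have neq : f0 i != g0 i by apply/eqP => E; move: dfg; rewrite E dS_refl; lia.
apply: (@seq_min_const _ (b i) (b i)).
  apply/mapP; exists (f0 i, g0 i); last by rewrite dfg.
  rewrite mem_filter /= neq; apply: allpairs_f; rewrite mem_undup; apply/mapP; [by exists f0 | by exists g0].
move=> y /mapP [[U V]]; rewrite mem_filter /= => /andP [UV /allpairsP [[U' V']]] /=.
case=> hU hV [eU eV] ->; subst U V.
have [f fC eU] := inproj _ hU; have [g gC eV] := inproj _ hV.
rewrite eU eV in UV *.
apply: key => //; apply/eqP => E; move: UV; by rewrite E eqxx.
Qed.
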